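(* Let $\Lambda\subset\mathbb{C}$ be a lattice, $p,q\ge2$ integers and $r\ge1$. Then $A_r^{sp}(z/q)B_r^{sp}(z)=B_r^{sp}(z/p)A_r^{sp}(z)$.
   Context: $\zeta(z,\Lambda)$ is the Weierstrass zeta function of $\Lambda$; $g_p(z)=p\zeta(qz,\Lambda)-\zeta(pqz,\Lambda)$ and $g_q(z)=q\zeta(pz,\Lambda)-\zeta(pqz,\Lambda)$. $A_r^{sp}=(a_{ij})$ is the upper triangular $r\times r$ matrix with $a_{ij}=\frac{p^{i-1}}{(j-i)!}g_p(z)^{j-i}$ for $i\le j$; $B_r^{sp}=(b_{ij})$ is the upper triangular matrix with $b_{ij}=\frac{q^{i-1}}{(j-i)!}g_q(z)^{j-i}$ for $i\le j$. *)

(* Defs.v *)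
From HB Require Import structures.
From mathcomp Require Import all_boot all_order all_algebra.
From mathcomp Require Import complex.
From mathcomp Require Import all_classical all_reals all_analysis.
Set Implicit Arguments. Unset Strict Implicit. Unset Printing Implicit Defensive.
Import Order.TTheory GRing.Theory Num.Theory Num.Def ComplexField.
Import numFieldNormedType.Exports.
Local Open Scope ring_scope.
Local Open Scope complex_scope.
Local Open Scope classical_set_scope.

Definition is_lattice_basis (R : realType) (w1 w2 : R[i]) : Prop :=
  forall a b : R, a%:C * w1 + b%:C * w2 = 0 -> a = 0 /\ b = 0.

Definition in_lattice (R : realType) (w1 w2 z : R[i]) : Prop :=
  exists m n : int, z = m%:~R * w1 + n%:~R * w2.

(* Symmetric square partial sums of the (absolutely convergent) series
   sum_{w in Lambda \ 0} (1/(z-w) + 1/w + z/w^2), over w = m w1 + n w2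
   with |m|,|n| <= N. *)
Definition zeta_partial (R : realType) (w1 w2 z : R[i]) (N : nat) : R[i] :=
  \sum_(i < (N + N).+1) \sum_(j < (N + N).+1 | (i, j) != (inord N, inord N))
    let w := ((i : nat)%:Z - N%:Z)%:~R * w1 + ((j : nat)%:Z - N%:Z)%:~R * w2 in
    ((z - w)^-1 + w^-1 + z / w ^+ 2).

(* Weierstrass zeta function zeta(z, Lambda) (meaningful for z not in Lambda). *)
Definition wzeta (R : realType) (w1 w2 z : R[i]) : R[i] :=
  z^-1 + limn (zeta_partial w1 w2 z : nat -> (R[i])^o).

Definition g_p (R : realType) (w1 w2 : R[i]) (p q : nat) (z : R[i]) : R[i] :=
  p%:R * wzeta w1 w2 (q%:R * z) - wzeta w1 w2 ((p * q)%:R * z).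

Definition g_q (R : realType) (w1 w2 : R[i]) (p q : nat) (z : R[i]) : R[i] :=
  q%:R * wzeta w1 w2 (p%:R * z) - wzeta w1 w2 ((p * q)%:R * z).

(* Upper triangular r x r matrix with (i,j) entry (1-based) c^(i-1)/(j-i)! g^(j-i)
   for i <= j; here indices are 0-based so the entry is c^i/(j-i)! g^(j-i). *)
Definition sp_mx (R : realType) (r : nat) (c : nat) (g : R[i]) : 'M[R[i]]_r :=
  \matrix_(i < r, j < r)
    if (i <= j)%N then (c ^ i)%:R / ((j - i)`!)%:R * g ^+ (j - i) else 0.

Definition A_sp (R : realType) (w1 w2 : R[i]) (p q r : nat) (z : R[i]) : 'M[R[i]]_r :=
  sp_mx r p (g_p w1 w2 p q z).

Definition B_sp (R : realType) (w1 w2 : R[i]) (p q r : nat) (z : R[i]) : 'M[R[i]]_r :=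
  sp_mx r q (g_q w1 w2 p q z).

(* Main.v *)
Require Import Defs.
From HB Require Import structures.
From mathcomp Require Import all_boot all_order all_algebra.
From mathcomp Require Import complex.
From mathcomp Require Import all_classical all_reals all_analysis.
From mathcomp Require Import ring.
Import Order.TTheory GRing.Theory Num.Theory ComplexField.
Local Open Scope ring_scope.

Lemma fact_neq0 (R : realType) (n : nat) : (n`!)%:R != 0 :> R[i].
Proof. by rewrite pnatr_eq0 -lt0n fact_gt0. Qed.

Lemma sp_mul (R : realType) (r c1 c2 : nat) (a b : R[i]) :
  sp_mx r c1 a *m sp_mx r c2 b = sp_mx r (c1 * c2) (a * c2%:R + b).
Proof.
apply/matrixP => i k; rewrite !mxE.
pose G (j : nat) : R[i] :=
  (if (i <= j)%N then (c1 ^ i)%:R / ((j - i)`!)%:R * a ^+ (j - i) else 0) *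
  (if (j <= k)%N then (c2 ^ j)%:R / ((k - j)`!)%:R * b ^+ (k - j) else 0).
transitivity (\sum_(j < r) G j); first by apply: eq_bigr => j _; rewrite !mxE.
case: (leqP i k) => hik; last first.
  rewrite big1 // => j _; rewrite /G.
  case: (leqP i j) => hij; last by rewrite mul0r.
  case: (leqP j k) => hjk; last by rewrite mulr0.
  by move: (leq_trans hij hjk); rewrite leqNgt hik.
rewrite -(big_mkord xpredT G) (big_cat_nat _ (n:=i)) //; last by apply: leq_trans hik (ltnW (ltn_ord k)).
rewrite (@big_cat_nat _ _ _ k.+1 i r) //; try exact: ltn_ord; try exact: ltnW.
have E1 : \sum_(0 <= j < i) G j = 0.
  rewrite big_nat_cond big1 // => j /andP[/andP[_ hj] _].
  by rewrite /G leqNgt hj mul0r.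
have E3 : \sum_(k.+1 <= j < r) G j = 0.
  rewrite big_nat_cond big1 // => j /andP[/andP[hj _] _].
  by rewrite /G (leqNgt j k) hj mulr0.
rewrite E1 E3 !Monoid.simpm.
have -> : \sum_(i <= j < k.+1) G j = \sum_(0 + i <= j < k.+1) G j by rewrite add0n.
rewrite big_addn subSn // big_mkord.
set n := (k - i)%N.
rewrite addrC exprDn mulr_sumr; apply: eq_bigr => m _.
have hm : (m <= n)%N by rewrite -ltnS.
have hmk : (m + i <= k)%N by rewrite addnC -leq_subRL.
rewrite /G leq_addl hmk addnK.
have -> : (k - (m + i) = n - m)%N by rewrite /n subnDA subnAC.
rewrite -(bin_fact hm) !natrX !natrM exprD exprMn -[(_ * _) *+ 'C(n, m)]mulr_natr.
have h1 := fact_neq0 R m.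
have h2 := fact_neq0 R (n - m).
have h3 : ('C(n, m))%:R != 0 :> R[i] by rewrite pnatr_eq0 -lt0n bin_gt0.

rewrite exprMn; move: h1 h2 h3; move: (m`!%:R) ((n-m)`!%:R) ('C(n,m)%:R) => X Y Z h1 h2 h3.
field.
by rewrite h3 h1 h2.
Qed.

Theorem lemma5p10 (R : realType) (w1 w2 : R[i]) (p q r : nat)
  (hL : is_lattice_basis w1 w2) (hp : (2 <= p)%N) (hq : (2 <= q)%N) (hr : (1 <= r)%N)
  (z : R[i]) (hz : ~ in_lattice w1 w2 ((p * q)%:R * z)) :
  A_sp w1 w2 p q r (z / q%:R) *m B_sp w1 w2 p q r z
  = B_sp w1 w2 p q r (z / p%:R) *m A_sp w1 w2 p q r z.
Proof.
rewrite /A_sp /B_sp !sp_mul mulnC; congr sp_mx.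
have q0 : q%:R != 0 :> R[i] by rewrite pnatr_eq0 -lt0n (leq_trans _ hq).
have p0 : p%:R != 0 :> R[i] by rewrite pnatr_eq0 -lt0n (leq_trans _ hp).
have hq1 : q%:R * (z / q%:R) = z by rewrite mulrC divfK.
have hp1 : p%:R * (z / p%:R) = z by rewrite mulrC divfK.
have hpq1 : (p * q)%:R * (z / q%:R) = p%:R * z by rewrite natrM -mulrA hq1.
have hpq2 : (p * q)%:R * (z / p%:R) = q%:R * z by rewrite mulnC natrM -mulrA hp1.
rewrite /g_p /g_q hpq1 hpq2 hq1 hp1.
ring.
Qed.
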